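(* Let $(X,d_X)$ and $(Y,d_Y)$ be nonempty finite metric spaces. Then $\overline{d_{\mathrm{GH}}}((X,d_X),(Y,d_Y))=0$ if and only if either there exists $c^*>0$ such that $(X,c^*d_X)$ is isometric to $(Y,d_Y)$, or $(Y,d_Y)$ is a one-point space.
   Context: The Gromov–Hausdorff distance is $d_{\mathrm{GH}}((X,d_X),(Y,d_Y))=\tfrac12\inf_{R}\sup_{(x,y),(x',y')\in R}|d_X(x,x')-d_Y(y,y')|$, the infimum over correspondences $R\subseteq X\times Y$ (relations whose projections onto $X$ and onto $Y$ are surjective). Define $\overline{d_{\mathrm{GH}}}((X,d_X),(Y,d_Y))=\inf_{c>0}d_{\mathrm{GH}}((X,c\,d_X),(Y,d_Y))$. *)

(* Defs.v *)
From mathcomp Require Import all_boot all_order all_algebra.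
From mathcomp Require Import boolp classical_sets reals.
Set Implicit Arguments. Unset Strict Implicit. Unset Printing Implicit Defensive.
Import Order.TTheory GRing.Theory Num.Theory.
Local Open Scope ring_scope.
Local Open Scope classical_set_scope.

Definition is_metric {R : realType} {T : finType} (d : T -> T -> R) : Prop :=
  (forall x y, 0 <= d x y) /\
  (forall x y, d x y = 0 <-> x = y) /\
  (forall x y, d x y = d y x) /\
  (forall x y z, d x z <= d x y + d y z).

Definition is_correspondence {T U : finType} (C : {set T * U}) : Prop :=
  (forall x : T, exists y : U, (x, y) \in C) /\
  (forall y : U, exists x : T, (x, y) \in C).

Definition distortion {R : realType} {T U : finType}
  (dX : T -> T -> R) (dY : U -> U -> R) (C : {set T * U}) : R :=
  sup [set r : R | exists p q : T * U,
         [/\ p \in C, q \in C & r = `|dX p.1 q.1 - dY p.2 q.2|] ].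

Definition dGH {R : realType} {T U : finType}
  (dX : T -> T -> R) (dY : U -> U -> R) : R :=
  2^-1 * inf [set r : R | exists C : {set T * U},
                 is_correspondence C /\ r = distortion dX dY C].

Definition dGHbar {R : realType} {T U : finType}
  (dX : T -> T -> R) (dY : U -> U -> R) : R :=
  inf [set r : R | exists c : R, 0 < c /\ r = dGH (fun x x' => c * dX x x') dY].

Definition isometric {R : realType} {T U : finType}
  (dX : T -> T -> R) (dY : U -> U -> R) : Prop :=
  exists f : T -> U, bijective f /\ forall x x', dY (f x) (f x') = dX x x'.

(* Main.v *)
Require Import Defs.
From mathcomp Require Import all_boot all_order all_algebra.
From mathcomp Require Import boolp classical_sets reals ring lra.
Import Order.TTheory GRing.Theory Num.Theory.
Local Open Scope ring_scope.
Local Open Scope classical_set_scope.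
Set Implicit Arguments.

Section Helpers.
Variables (R : realType) (T U : finType).
Implicit Types (dX : T -> T -> R) (dY : U -> U -> R) (C : {set T * U}).

Definition Dset dX dY C := [set r : R | exists p q : T * U,
         [/\ p \in C, q \in C & r = `|dX p.1 q.1 - dY p.2 q.2|] ].

Lemma Dset_ub dX dY C : has_ubound (Dset dX dY C).
Proof.
exists (\big[Order.max/0]_(p : T * U) \big[Order.max/0]_(q : T * U)
          `|dX p.1 q.1 - dY p.2 q.2|).
move=> r [p [q [_ _ ->]]].
apply: le_trans (le_bigmax _ _ p).
exact: (le_bigmax _ (fun q => `|dX p.1 q.1 - dY p.2 q.2|) q).
Qed.

Lemma dist_ub dX dY C p q : p \in C -> q \in C ->
  `|dX p.1 q.1 - dY p.2 q.2| <= distortion dX dY C.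
Proof.
move=> pC qC; apply: (sup_upper_bound (E := Dset dX dY C)).
  split; last exact: Dset_ub.
  by exists `|dX p.1 q.1 - dY p.2 q.2|, p, q.
by exists p, q.
Qed.

Lemma dist_le dX dY C B p0 : p0 \in C ->
  (forall p q, p \in C -> q \in C -> `|dX p.1 q.1 - dY p.2 q.2| <= B) ->
  distortion dX dY C <= B.
Proof.
move=> p0C H; apply: ge_sup.
  by exists `|dX p0.1 p0.1 - dY p0.2 p0.2|, p0, p0.
by move=> r [p [q [pC qC ->]]]; apply: H.
Qed.

Lemma dist_ge0 dX dY C p0 : p0 \in C -> 0 <= distortion dX dY C.
Proof. by move=> p0C; have := dist_ub dX dY p0C p0C; apply: le_trans. Qed.

Definition Gset dX dY := [set r : R | exists C : {set T * U},
                 is_correspondence C /\ r = distortion dX dY C].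

Lemma corr_ne C (x0 : T) : is_correspondence C -> exists p, p \in C.
Proof. by case=> H _; case: (H x0) => y Hy; exists (x0, y). Qed.

Lemma corrT (x0 : T) (y0 : U) : is_correspondence [set: T * U]%SET.
Proof. by split=> [x|y]; [exists y0|exists x0]; rewrite inE. Qed.

Lemma dGH_le dX dY (x0 : T) C : is_correspondence C ->
  dGH dX dY <= 2^-1 * distortion dX dY C.
Proof.
move=> HC; rewrite /dGH ler_pM2l ?invr_gt0 ?ltr0n //.
have lb : has_lbound (Gset dX dY).
  exists 0 => r [C' [HC' ->]].
  by case: (corr_ne x0 HC') => p pC; apply: dist_ge0 pC.
by apply: (ge_inf lb); exists C.
Qed.

Lemma dGH_ge dX dY (x0 : T) (y0 : U) l :
  (forall C, is_correspondence C -> l <= distortion dX dY C) ->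
  2^-1 * l <= dGH dX dY.
Proof.
move=> H; rewrite /dGH ler_pM2l ?invr_gt0 ?ltr0n //.
apply: lb_le_inf.
  by exists (distortion dX dY [set: T * U]%SET), [set: T * U]%SET; split=> //; apply: corrT.
by move=> r [C [HC ->]]; apply: H.
Qed.

Lemma dGH_ge0 dX dY (x0 : T) (y0 : U) : 0 <= dGH dX dY.
Proof.
have := @dGH_ge dX dY x0 y0 0; rewrite mulr0; apply => C HC.
by case: (corr_ne x0 HC) => p pC; apply: dist_ge0 pC.
Qed.


Definition sc (c : R) dX := fun x x' => c * dX x x'.

Definition Hset dX dY := [set r : R | exists c : R, 0 < c /\ r = dGH (fun x x' => c * dX x x') dY].

Lemma dGHbar_le dX dY (x0 : T) (y0 : U) c : 0 < c ->
  dGHbar dX dY <= dGH (fun x x' => c * dX x x') dY.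
Proof.
move=> c0; have lb : has_lbound (Hset dX dY).
  by exists 0 => r [c' [_ ->]]; apply: dGH_ge0 x0 y0.
by apply: (ge_inf lb); exists c.
Qed.

Lemma dGHbar_ge dX dY l :
  (forall c, 0 < c -> l <= dGH (fun x x' => c * dX x x') dY) ->
  l <= dGHbar dX dY.
Proof.
move=> H; apply: lb_le_inf.
  by exists (dGH (fun x x' => 1 * dX x x') dY), 1; split.
by move=> r [c [c0 ->]]; apply: H.
Qed.

Lemma dGHbar_ge0 dX dY (x0 : T) (y0 : U) : 0 <= dGHbar dX dY.
Proof. by apply: dGHbar_ge => c _; apply: dGH_ge0 x0 y0. Qed.

End Helpers.
Arguments dGHbar_le {R T U dX dY} x0 y0 {c}.
Arguments dGH_le {R T U dX dY} x0 {C}.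
Arguments dist_le {R T U dX dY C B p0}.
Arguments dist_ub {R T U dX dY C p q}.
Arguments dist_ge0 {R T U dX dY C p0}.
Arguments dGH_ge {R T U dX dY} x0 y0 {l}.
Arguments dGH_ge0 {R T U dX dY} x0 y0.
Arguments dGHbar_ge {R T U dX dY l}.
Arguments dGHbar_ge0 {R T U dX dY} x0 y0.
Arguments corrT {T U} x0 y0.

Section P.
Variables (R : realType) (T U : finType).
Variables (dX : T -> T -> R) (dY : U -> U -> R) (x0 : T) (y0 : U).

Lemma partA c : 0 < c -> isometric (fun x x' => c * dX x x') dY ->
  dGHbar dX dY = 0.
Proof.
move=> c0 [f [[g fK gK] Hf]].
pose C := [set p : T * U | p.2 == f p.1]%SET.
have HC : is_correspondence C.
  split=> [x|y]; first by exists (f x); rewrite inE.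
  by exists (g y); rewrite inE /= gK.
apply/eqP; rewrite eq_le dGHbar_ge0 // andbT.
apply: (le_trans (dGHbar_le x0 y0 c0)).
apply: (le_trans (dGH_le x0 HC)).
rewrite -(mulr0 2^-1) ler_pM2l ?invr_gt0 ?ltr0n //.
have [p pC] := corr_ne x0 HC.
apply: (dist_le pC) => [[x y] [x' y']]; rewrite !inE /= => /eqP -> /eqP ->.
by rewrite Hf subrr normr0.
Qed.

Lemma partB (mY : is_metric dY) (mX : is_metric dX) : #|U| = 1%N -> dGHbar dX dY = 0.
Proof.
move=> U1.
have yy : forall y y' : U, y = y'.
  move=> y y'; case: (fintype1 U1) => z Hz; by rewrite (Hz y) (Hz y').
have dY0 : forall y y', dY y y' = 0.
  by move=> y y'; rewrite (yy y y'); apply/(proj1 (proj2 mY)).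
pose M := \big[Order.max/0]_(x : T) \big[Order.max/0]_(x' : T) dX x x'.
have HM : forall x x', dX x x' <= M.
  move=> x x'; apply: le_trans (le_bigmax _ _ x).
  exact: (le_bigmax _ (fun x' => dX x x') x').
have M0 : 0 <= M by apply: le_trans (HM x0 x0); apply: (proj1 mX).
apply/eqP; rewrite eq_le dGHbar_ge0 // andbT.
apply/ler_addgt0Pr => e e0; rewrite add0r.
have M1 : 0 < M + 1 by rewrite ltr_wpDl.
pose c := e / (M + 1).
have c0 : 0 < c by rewrite divr_gt0.
apply: (le_trans (dGHbar_le x0 y0 c0)).
have HC := corrT x0 y0.
apply: (le_trans (dGH_le x0 HC)).
have [p pC] := corr_ne x0 HC.
have : distortion (fun x x' => c * dX x x') dY [set: T * U]%SET <= e.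
  apply: (dist_le pC) => q q' _ _.
  rewrite dY0 subr0 ger0_norm; last by rewrite mulr_ge0 ?(ltW c0) //; apply: (proj1 mX).
  apply: le_trans (_ : c * (M + 1) <= e).
    by rewrite ler_pM2l // ler_wpDr.
  by rewrite /c divfK // gt_eqF.
move=> H; apply: le_trans (_ : 2^-1 * e <= e).
  by rewrite ler_pM2l ?invr_gt0 ?ltr0n.
by rewrite ler_piMl ?(ltW e0) // invf_le1 ?ler1n.
Qed.

End P.

Lemma fin_min (R : realType) (K : finType) (P : K -> R -> Prop) :
  (forall k l l', 0 < l' -> l' <= l -> P k l -> P k l') ->
  (forall k, exists l, 0 < l /\ P k l) -> exists l, 0 < l /\ forall k, P k l.
Proof.
move=> Pm Hk.
have main : forall s : seq K, exists l, 0 < l /\ forall k, k \in s -> P k l.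
  elim=> [|k s [l1 [l10 H1]]]; first by exists 1; split.
  have [l2 [l20 H2]] := Hk k.
  exists (Num.min l1 l2); split; first by rewrite lt_min l10 l20.
  move=> k'; rewrite inE => /orP [/eqP ->|ks].
    by apply: Pm (H2); rewrite ?lt_min ?l10 ?l20 // ge_min lexx orbT.
  by apply: Pm (H1 _ ks); rewrite ?lt_min ?l10 ?l20 // ge_min lexx.
have [l [l0 Hl]] := main (enum K).
by exists l; split=> // k; apply: Hl; rewrite mem_enum.
Qed.

Section P.
Variables (R : realType) (T U : finType).
Variables (dX : T -> T -> R) (dY : U -> U -> R).
Hypotheses (mX : is_metric dX) (mY : is_metric dY).

Lemma iso_of c C : 0 < c -> is_correspondence C ->
  (forall p q, p \in C -> q \in C -> c * dX p.1 q.1 = dY p.2 q.2) ->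
  isometric (fun x x' => c * dX x x') dY.
Proof.
move=> c0 [H1 H2] H.
pose f x := xchoose (H1 x). pose g y := xchoose (H2 y).
have Hf x : (x, f x) \in C := xchooseP (H1 x).
have Hg y : (g y, y) \in C := xchooseP (H2 y).
have [_ [mX0 _]] := mX. have [_ [mY0 _]] := mY.
have dX0 x x' : dX x x' = 0 -> x = x' by move/mX0.
have dY0 y y' : dY y y' = 0 -> y = y' by move/mY0.
have dXx x : dX x x = 0 by apply/mX0.
have dYy y : dY y y = 0 by apply/mY0.
exists f; split.
  exists g => [x|y].
    apply/esym/dX0; have := H _ _ (Hf x) (Hg (f x)); rewrite /= dYy.
    by move/eqP; rewrite mulf_eq0 gt_eqF //= => /eqP.
  apply/dY0; have := H _ _ (Hf (g y)) (Hg y); rewrite /= dXx mulr0.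
  by move=> h; rewrite -h.
by move=> x x'; rewrite -(H _ _ (Hf x) (Hf x')).
Qed.
End P.

Section P.
Variables (R : realType) (T U : finType).
Variables (dX : T -> T -> R) (dY : U -> U -> R).
Hypotheses (mX : is_metric dX) (mY : is_metric dY).

Lemma perC (nI : ~ exists c, 0 < c /\ isometric (fun x x' => c * dX x x') dY)
  (y y' : U) (yy : y != y') C (HC : is_correspondence C) :
  exists L, 0 < L /\ forall c, 0 < c ->
    L <= distortion (fun x x' => c * dX x x') dY C.
Proof.
have [dX_ge0 [mX0 _]] := mX. have [dY_ge0 [mY0 _]] := mY.
have d0 : 0 < dY y y'.
  rewrite lt_neqAle dY_ge0 andbT; apply/eqP => /esym /mY0 /eqP.
  by rewrite (negbTE yy).
have [H1 H2] := HC.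
have [x1 Hx1] := H2 y. have [x2 Hx2] := H2 y'.
set a := dX x1 x2; set dl := dY y y'.
have a0 : 0 <= a by apply: dX_ge0.
have g1 c : `|c * a - dl| <= distortion (fun x x' => c * dX x x') dY C.
  exact: (dist_ub Hx1 Hx2).
case: (eqVneq a 0) => [az|anz].
  exists dl; split => // c c0; apply: le_trans (g1 c).
  by rewrite az mulr0 sub0r normrN gtr0_norm.
have apos : 0 < a by rewrite lt_neqAle eq_sym anz a0.
pose cs := dl / a.
have cs0 : 0 < cs by rewrite divr_gt0.
case: (pselect (exists p q, [/\ p \in C, q \in C &
                 cs * dX p.1 q.1 != dY p.2 q.2])) => [[p [q [pC qC ne]]]|nex].
  set a' := dX p.1 q.1; set b' := dY p.2 q.2.
  have a'0 : 0 <= a' by apply: dX_ge0.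
  set eta := `|cs * a' - b'|.
  have eta0 : 0 < eta by rewrite normr_gt0 subr_eq0.
  have aa0 : 0 < a + a' by rewrite ltr_wpDr.
  exists (eta * a / (a + a')); split.
    by rewrite divr_gt0 // mulr_gt0.
  move=> c c0.
  set g := distortion _ dY C.
  have g2 : `|c * a' - b'| <= g by apply: (dist_ub pC qC).
  have gg1 := g1 c.
  set k := `|cs - c|.
  have h1 : eta <= `|c * a' - b'| + k * a'.
    rewrite /eta; have -> : cs * a' - b' = (c * a' - b') + (cs - c) * a' by ring.
    by apply: le_trans (ler_normD _ _) _; rewrite normrM (ger0_norm a'0).
  have h2 : a * k = `|c * a - dl|.
    rewrite /k -{1}(ger0_norm a0) -normrM mulrBr /cs mulrC divfK ?gt_eqF //.
    by rewrite distrC (mulrC a).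
  rewrite ler_pdivrMr //.
  have k0 : 0 <= k by apply: normr_ge0.
  have n0 : 0 <= `|c * a' - b'| by apply: normr_ge0.
  have e1 : eta * a <= (`|c * a' - b'| + k * a') * a by rewrite ler_wpM2r.
  have e2 : (`|c * a' - b'| + k * a') * a = `|c * a' - b'| * a + (a * k) * a' by ring.
  rewrite h2 in e2.
  have e3 : `|c * a' - b'| * a <= g * a by rewrite ler_wpM2r.
  have e4 : `|c * a - dl| * a' <= g * a' by rewrite ler_wpM2r.
  rewrite mulrDr; lra.
exfalso; apply: nI; exists cs; split => //.
apply: (@iso_of _ _ _ _ _ mX mY cs _ cs0 HC) => p q pC qC.
apply/eqP; apply: contrapT => ne; apply: nex; exists p, q; split => //; apply/negP.
exact: ne.
Qed.

End P.

Unset Implicit Arguments.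
Local Close Scope classical_set_scope.

Theorem mainTheorem4 (R : realType) (T U : finType)
  (dX : T -> T -> R) (dY : U -> U -> R) :
  is_metric dX -> is_metric dY -> (0 < #|T|)%N -> (0 < #|U|)%N ->
  (dGHbar dX dY = 0 <->
    ((exists c : R, 0 < c /\ isometric (fun x x' => c * dX x x') dY)
     \/ #|U| = 1%N)).
Proof.
move=> mX mY T0 U0.
have /card_gt0P [x0 _] := T0. have /card_gt0P [y0 _] := U0.
split; last first.
  case=> [[c [c0 Hi]]|U1]; first exact: (@partA R T U dX dY x0 y0 c c0 Hi). 
  exact: (@partB R T U dX dY x0 y0 mY mX U1).
move=> H0; case: (eqVneq #|U| 1%N) => [->|U1]; [by right|left].
apply: contrapT => nI.
have [y [y' [_ _ yy]]] : exists y y' : U, [/\ y \in U, y' \in U & y != y'].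
  by apply/card_gt1P; rewrite ltn_neqAle eq_sym U1 U0.
have [L [L0 HL]] : exists L : R, 0 < L /\ forall C, is_correspondence C -> forall c, 0 < c ->
    L <= distortion (fun x x' => c * dX x x') dY C.
  apply: fin_min => [C l l' _ le H HC c c0|C].
    exact: le_trans le (H HC c c0).
  case: (pselect (is_correspondence C)) => HC.
    have [L [L0 HL]] := @perC R T U dX dY mX mY nI y y' yy C HC.
    by exists L; split => // _.
  by exists 1; split => // /HC.
have : 2^-1 * L <= dGHbar dX dY.
  apply: dGHbar_ge => c c0; apply: (dGH_ge x0 y0) => C HC.
  exact: HL C HC c c0.
rewrite H0 => contra.
have : 0 < 2^-1 * L by rewrite mulr_gt0 // invr_gt0 ltr0n.
lra.
Qed.
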